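(* Let $\phi_+,\phi_-,\psi_+,\psi_-$ be unit vectors in $\mathbb{C}^2$ such that $0 < |\langle\phi_+,\phi_-\rangle| < 1$. Then there exists a unitary matrix $U$ such that $U\phi_+ = \psi_-$ and $U\phi_-$ is proportional neither to $\psi_+$ nor to $\psi_-$.
   Context: $\langle\cdot,\cdot\rangle$ denotes the standard Hermitian inner product on $\mathbb{C}^2$. *)

(* Defs.v *)
From HB Require Import structures.
From mathcomp Require Import all_boot all_order all_algebra.
From mathcomp Require Import complex reals.
Set Implicit Arguments. Unset Strict Implicit. Unset Printing Implicit Defensive.
Import Order.TTheory GRing.Theory Num.Theory.
Local Open Scope ring_scope.

Definition hinner (R : rcfType) (n : nat) (u v : 'cV[R[i]]_n) : R[i] :=
  \sum_(k < n) (u k 0)^* * v k 0.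

Definition adjmx (R : rcfType) (m n : nat) (A : 'M[R[i]]_(m, n)) : 'M[R[i]]_(n, m) :=
  (map_mx (fun z => z^*) A)^T.

Definition unitary_mx (R : rcfType) (n : nat) (U : 'M[R[i]]_n) : Prop :=
  adjmx U *m U = 1%:M.

Definition unit_vec (R : rcfType) (n : nat) (u : 'cV[R[i]]_n) : Prop :=
  hinner u u = 1.

Definition proportional (R : rcfType) (n : nat) (u v : 'cV[R[i]]_n) : Prop :=
  exists c : R[i], u = c *: v.

(* Main.v *)
Require Import Defs.
From HB Require Import structures.
From mathcomp Require Import all_boot all_order all_algebra.
From mathcomp Require Import complex reals.
From mathcomp Require Import ring.
Import Order.TTheory GRing.Theory Num.Theory.
Local Open Scope ring_scope.
Set Implicit Arguments. Unset Strict Implicit.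

Section Aux.
Variable R : realType.
Local Notation C := (R[i]).

Lemma ord2P (i : 'I_2) : i = ord0 \/ i = ord_max.
Proof. case: i => [[|[|n]] Hn]; [left|right|]; try exact/val_inj. by []. Qed.

Lemma ord1P (j : 'I_1) : j = 0.
Proof. by apply/val_inj; case: j => [[]]. Qed.

Lemma sum2 (F : 'I_2 -> C) : \sum_(k < 2) F k = F ord0 + F ord_max.
Proof. rewrite big_ord_recl big_ord1; congr (_ + F _); exact/val_inj. Qed.

Lemma cD (x y : C) : (x + y)^* = x^* + y^*. Proof. exact: rmorphD. Qed.
Lemma cM (x y : C) : (x * y)^* = x^* * y^*. Proof. exact: rmorphM. Qed.
Lemma cN (x : C) : (- x)^* = - x^*. Proof. exact: rmorphN. Qed.

Definition Umx (phip psim : 'cV[C]_2) (l : C) : 'M[C]_2 :=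
  \matrix_(i < 2, j < 2)
    (psim i 0 * (phip j 0)^* +
     l * (if val i == 0%N then - (psim ord_max 0)^* else (psim ord0 0)^*)
       * (if val j == 0%N then - phip ord_max 0 else phip ord0 0)).

Lemma lag (x0 x1 y0 y1 : C) :
  (x0^* * y0 + x1^* * y1) * (x0^* * y0 + x1^* * y1)^*
  + (- x1 * y0 + x0 * y1) * (- x1 * y0 + x0 * y1)^*
  = (x0^* * x0 + x1^* * x1) * (y0^* * y0 + y1^* * y1).
Proof. rewrite !cD !cM !cN !conjCK. ring. Qed.


Lemma Umx_unitary (phip psim : 'cV[C]_2) (l : C) :
  (l = 1 \/ l = -1) ->
  (phip ord0 0)^* * phip ord0 0 + (phip ord_max 0)^* * phip ord_max 0 = 1 ->
  (psim ord0 0)^* * psim ord0 0 + (psim ord_max 0)^* * psim ord_max 0 = 1 ->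
  unitary_mx (Umx phip psim l).
Proof.
move=> hl ha hm; apply/matrixP => i j; rewrite !mxE sum2 !mxE /=.
case: (ord2P i) => ->; case: (ord2P j) => -> /=; rewrite !cD !cM !cN !conjCK.
- by rewrite -[1]mulr1 -{1}hm -ha; case: hl => ->; rewrite ?conjC1 ?conjCN1; ring.
- by case: hl => ->; rewrite ?conjC1 ?conjCN1; ring.
- by case: hl => ->; rewrite ?conjC1 ?conjCN1; ring.
- by rewrite -[1]mulr1 -{1}hm -ha; case: hl => ->; rewrite ?conjC1 ?conjCN1; ring.
Qed.

Lemma Umx_phip (phip psim : 'cV[C]_2) (l : C) :
  (phip ord0 0)^* * phip ord0 0 + (phip ord_max 0)^* * phip ord_max 0 = 1 ->
  Umx phip psim l *m phip = psim.
Proof.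
move=> ha; apply/matrixP => i j; rewrite (ord1P j) !mxE sum2 !mxE /=.
case: (ord2P i) => -> /=.
- by rewrite -[X in _ = X]mulr1 -ha; ring.
- by rewrite -[X in _ = X]mulr1 -ha; ring.
Qed.
End Aux.

Theorem lemma11 (R : realType) (phip phim psip psim : 'cV[R[i]]_2) :
  unit_vec phip -> unit_vec phim -> unit_vec psip -> unit_vec psim ->
  0 < `|hinner phip phim| -> `|hinner phip phim| < 1 ->
  exists U : 'M[R[i]]_2,
    unitary_mx U /\ U *m phip = psim /\
    ~ proportional (U *m phim) psip /\ ~ proportional (U *m phim) psim.
Proof.
rewrite /unit_vec /hinner !sum2 => ha hb hp hm hs0 hs1.
set s := _ + _ in hs0 hs1.
pose t := - phip ord_max 0 * phim ord0 0 + phip ord0 0 * phim ord_max 0.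
pose P := (psim ord0 0)^* * psip ord0 0 + (psim ord_max 0)^* * psip ord_max 0.
pose Q := - psim ord_max 0 * psip ord0 0 + psim ord0 0 * psip ord_max 0.
have hsn : s != 0 by rewrite -normr_gt0.
have htn : t != 0.
  apply/eqP => ht.
  have := lag (phip ord0 0) (phip ord_max 0) (phim ord0 0) (phim ord_max 0).
  rewrite -/s -/t ht mul0r addr0 ha hb mulr1 -normCK => /eqP.
  by rewrite sqrp_eq1 // => /eqP h; rewrite h ltxx in hs1.
pose l : R[i] := if t * P == s * Q then -1 else 1.
have hl : l = 1 \/ l = -1 by rewrite /l; case: eqP; auto.
have ln0 : l != 0 by case: hl => ->; rewrite ?oppr_eq0 oner_eq0.
have key : forall v0 v1 : R[i],
    (Umx phip psim l *m phim) ord0 0 = v0 ->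
    (Umx phip psim l *m phim) ord_max 0 = v1 ->
    (psim ord0 0)^* * v0 + (psim ord_max 0)^* * v1 = s /\
    - psim ord_max 0 * v0 + psim ord0 0 * v1 = l * t.
  move=> v0 v1; rewrite !mxE !sum2 !mxE /= => <- <-; split.
  - by rewrite -[X in _ = X]mul1r -{1}hm /s; ring.
  - by rewrite -[X in _ = X]mul1r -{1}hm /t; ring.
exists (Umx phip psim l); split; first exact: Umx_unitary.
split; first exact: Umx_phip.
split.
- move=> [c Hc].
  have e0 := congr1 (fun M : 'M[R[i]]_(2,1) => M ord0 0) Hc.
  have e1 := congr1 (fun M : 'M[R[i]]_(2,1) => M ord_max 0) Hc.
  rewrite /= [in RHS]mxE in e0; rewrite /= [in RHS]mxE in e1.
  have [k1 k2] := key _ _ e0 e1.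
  have k1' : s = c * P by rewrite -k1 /P; ring.
  have k2' : l * t = c * Q by rewrite -k2 /Q; ring.
  have k : l * (t * P) = s * Q by rewrite mulrA k2' k1'; ring.
  move: k; rewrite /l; case: eqP => E.
  + rewrite -E mulN1r => /eqP; rewrite eqNr mulf_eq0 (negPf htn) /= => /eqP hP.
    move: E; rewrite hP mulr0 => /esym/eqP; rewrite mulf_eq0 (negPf hsn) /= => /eqP hQ.
    have := lag (psim ord0 0) (psim ord_max 0) (psip ord0 0) (psip ord_max 0).
    rewrite -/P -/Q hP hQ !mul0r addr0 hm hp mulr1 => /eqP.
    by rewrite eq_sym oner_eq0.
  + by rewrite mul1r.
- move=> [c Hc].
  have e0 := congr1 (fun M : 'M[R[i]]_(2,1) => M ord0 0) Hc.
  have e1 := congr1 (fun M : 'M[R[i]]_(2,1) => M ord_max 0) Hc.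
  rewrite /= [in RHS]mxE in e0; rewrite /= [in RHS]mxE in e1.
  have [k1 k2] := key _ _ e0 e1.
  move: k2; have -> : - psim ord_max 0 * (c * psim ord0 0) + psim ord0 0 * (c * psim ord_max 0) = 0 by ring.
  by move=> /esym/eqP; rewrite mulf_eq0 (negPf ln0) (negPf htn).
Qed.
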